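(* Given two curves $\sigma=(v_1,\dots,v_{m'})$ and $\tau=(w_1,\dots,w_{m''})$ in $\mathbb{R}^d$ and a parameter $k\in\mathbb{N}$, the following algorithm returns exactly $d_{k\text{-}DTW}(\sigma,\tau)$ and runs in $O(m'm''z)$ time, where $z$ is the number of distinct distances $\|v_i-w_j\|$ between pairs of vertices of $\sigma$ and $\tau$. Algorithm: set $D[i,j]=\|v_i-w_j\|$ for all $(i,j)\in[m']\times[m'']$; let $E[1]>\dots>E[z]>E[z+1]=0$ be the $z$ distinct entries of $D$ together with $0$, in decreasing order; set mincost $=\infty$; for each $l\in\{1,\dots,z+1\}$, let $D'[i,j]=\max\{D[i,j]-E[l],0\}$ for all $(i,j)$ and update mincost $\leftarrow\min\{\text{mincost},\ \mathrm{DTW}(D')+k\cdot E[l]\}$; return mincost.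
   Context: A traversal of $\sigma$ and $\tau$ is a sequence of index pairs starting with $(1,1)$, ending with $(m',m'')$, where each $(i,j)$ is followed only by $(i+1,j)$, $(i,j+1)$ or $(i+1,j+1)$. For a matrix $D'\in\mathbb{R}^{m'\times m''}$, $\mathrm{DTW}(D')=\min_T\sum_{(i,j)\in T}D'[i,j]$ over all traversals $T$ (computable in $O(m'm'')$ time by dynamic programming). For a traversal $T$ let $s^{(T)}_1\ge s^{(T)}_2\ge\dots$ be the values $\|v_i-w_j\|$, $(i,j)\in T$, sorted non-increasingly, padded with zeros beyond $|T|$; $d_{k\text{-}DTW}(\sigma,\tau)=\min_T\sum_{l=1}^k s^{(T)}_l$. Running time counts each vertex-to-vertex distance computation and each arithmetic operation as unit cost. *)

(* Defs.v *)
From HB Require Import structures.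
From mathcomp Require Import all_boot all_order all_algebra.
From mathcomp Require Import reals.
Set Implicit Arguments. Unset Strict Implicit. Unset Printing Implicit Defensive.
Import Order.TTheory GRing.Theory Num.Theory.
Local Open Scope ring_scope.

Section KDTW.
Variables (R : realType) (d : nat).
Implicit Types (sigma tau : seq 'rV[R]_d).

Definition vnorm (v : 'rV[R]_d) : R := Num.sqrt (\sum_(i < d) v 0 i ^+ 2).

(* 0-based vertex distance ||v_i - w_j|| *)
Definition vdist sigma tau (i j : nat) : R :=
  vnorm (nth 0 sigma i - nth 0 tau j).

Definition tstep (p q : nat * nat) : bool :=
  [|| q == (p.1.+1, p.2), q == (p.1, p.2.+1) | q == (p.1.+1, p.2.+1)].

Definition traversal (m1 m2 : nat) (T : seq (nat * nat)) : bool :=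
  if T is p :: T' then
    [&& p == (0%N, 0%N), path tstep p T' & last p T' == (m1.-1, m2.-1)]
  else false.

(* sum of the k largest distances along T (padded with zeros) *)
Definition kcost sigma tau (k : nat) (T : seq (nat * nat)) : R :=
  let s := sort (fun x y : R => y <= x) [seq vdist sigma tau p.1 p.2 | p <- T] in
  \sum_(l < k) nth 0 s l.

Definition is_kDTW sigma tau (k : nat) (x : R) : Prop :=
  (exists2 T, traversal (size sigma) (size tau) T & x = kcost sigma tau k T) /\
  (forall T, traversal (size sigma) (size tau) T -> x <= kcost sigma tau k T).

Definition num_distinct sigma tau : nat :=
  size (undup [seq vdist sigma tau i j | i <- iota 0 (size sigma),
                                         j <- iota 0 (size tau)]).

(* ---------- The algorithm, instrumented with a unit-cost operation counter.
   Every function returns (result, number of unit operations). ---------- *)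

(* collect distinct values; membership test in U costs size U comparisons *)
Definition distinct_c (L : seq R) : seq R * nat :=
  foldl (fun acc x =>
           let: (U, c) := acc in
           ((if x \in U then U else x :: U), (c + size U)%N)) ([::], 0%N) L.

Fixpoint ins_c (x : R) (s : seq R) : seq R * nat :=
  match s with
  | [::] => ([:: x], 0%N)
  | y :: s' => if y < x then (x :: y :: s', 1%N)
               else let: (t, c) := ins_c x s' in (y :: t, c.+1)
  end.

Definition isort_c (s : seq R) : seq R * nat :=
  foldr (fun x acc => let: (t, c) := ins_c x acc.1 in (t, (acc.2 + c)%N))
        ([::], 0%N) s.

Fixpoint first_row_aux (a : nat -> R) (j n : nat) (prev : R) : seq R * nat :=
  match n with
  | 0 => ([::], 0%N)
  | n'.+1 => let c := prev + a j in
             let: (r, k) := first_row_aux a j.+1 n' c in (c :: r, k.+1)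
  end.

Definition first_row (a : nat -> R) (m2 : nat) : seq R * nat :=
  match m2 with
  | 0 => ([::], 0%N)
  | m.+1 => let c0 := a 0%N in
            let: (r, k) := first_row_aux a 1 m c0 in (c0 :: r, k)
  end.

(* c_j = a j + min(prev_j, prev_{j-1}, c_{j-1}) : 3 operations *)
Fixpoint next_aux (a : nat -> R) (j : nat) (ps : seq R) (pdiag cleft : R)
  : seq R * nat :=
  match ps with
  | [::] => ([::], 0%N)
  | p :: ps' => let c := a j + Num.min p (Num.min pdiag cleft) in
                let: (r, k) := next_aux a j.+1 ps' p c in (c :: r, (k + 3)%N)
  end.

Definition next_row (a : nat -> R) (prev : seq R) : seq R * nat :=
  match prev with
  | [::] => ([::], 0%N)
  | p0 :: ps => let c0 := p0 + a 0%N in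
                let: (r, k) := next_aux a 1 ps p0 c0 in (c0 :: r, k.+1)
  end.

Fixpoint rows_from (A : nat -> nat -> R) (i n : nat) (prev : seq R)
  : seq R * nat :=
  match n with
  | 0 => (prev, 0%N)
  | n'.+1 => let: (r, k) := next_row (A i) prev in
             let: (r', k') := rows_from A i.+1 n' r in (r', (k + k')%N)
  end.

Definition dtw_dp (A : nat -> nat -> R) (m1 m2 : nat) : R * nat :=
  let: (r0, k0) := first_row (A 0%N) m2 in
  let: (r, k) := rows_from A 1 m1.-1 r0 in (last 0 r, (k0 + k)%N).

(* The algorithm of the statement.  mincost = None encodes +infinity. *)
Definition kdtw_alg sigma tau (k : nat) : option R * nat :=
  let m1 := size sigma in
  let m2 := size tau in
  let D := vdist sigma tau in
  let cD := (m1 * m2)%N in                         (* distance computations *)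
  let L := [seq D i j | i <- iota 0 m1, j <- iota 0 m2] in
  let: (U, cU) := distinct_c L in
  let: (Srt, cS) := isort_c U in
  let E := Srt ++ [:: 0] in                          (* E[1] > ... > E[z] , 0 *)
  let: (res, cL) :=
     foldl (fun acc e =>
              let Dp := fun i j => Num.max (D i j - e) 0 in  (* 2 ops/cell *)
              let: (t, ct) := dtw_dp Dp m1 m2 in
              let cand := t + k%:R * e in                    (* 2 ops *)
              (Some (if acc.1 is Some x then Num.min x cand else cand),
               (acc.2 + 2 * (m1 * m2) + ct + 3)%N))        (* +1 for min *)
           (None, 0%N) E in
  (res, (cD + cU + cS + cL)%N).

End KDTW.

(* Main.v *)
Require Import Defs.
From HB Require Import structures.
From mathcomp Require Import all_boot all_order all_algebra.
From mathcomp Require Import reals zify.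
Set Implicit Arguments. Unset Strict Implicit. Unset Printing Implicit Defensive.
Import Order.TTheory GRing.Theory Num.Theory.
Local Open Scope ring_scope.

Section DP.
Variable R : realType.

Definition pto (q : nat * nat) (T : seq (nat * nat)) : bool :=
  if T is p :: T' then [&& p == (0%N, 0%N), path tstep p T' & last p T' == q]
  else false.

Lemma tstep00 q : tstep q (0%N, 0%N) = false.
Proof. by case: q => a b; rewrite /tstep /= !xpair_eqE /= !andbF. Qed.

Lemma tstep_r0 q j : tstep q (0%N, j.+1) -> q = (0%N, j).
Proof. by case: q => a b; rewrite /tstep => /or3P [] /eqP [] *; subst. Qed.

Lemma tstep_c0 q i : tstep q (i.+1, 0%N) -> q = (i, 0%N).
Proof. by case: q => a b; rewrite /tstep => /or3P [] /eqP [] *; subst. Qed.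

Lemma tstep_in q i j : tstep q (i.+1, j.+1) ->
  [\/ q = (i, j.+1), q = (i.+1, j) | q = (i, j)].
Proof.
case: q => a b; rewrite /tstep => /or3P [] /eqP [] *; subst.
- by constructor 1.
- by constructor 2.
- by constructor 3.
Qed.

Lemma pto_rcons q0 q T : pto q0 T -> tstep q0 q -> pto q (rcons T q).
Proof.
case: T => [|p T] //= /and3P [/eqP -> Hp /eqP Hl] Hs.
by rewrite rcons_path Hp /= last_rcons Hl Hs eqxx.
Qed.

Lemma pto_dec q T : pto q T -> q != (0%N,0%N) ->
  exists T0 q0, [/\ T = rcons T0 q, pto q0 T0 & tstep q0 q].
Proof.
case: T => [|p T] //= /and3P [/eqP -> Hpath /eqP Hl] Hq.
case/lastP: T Hpath Hl => [|T x] /=.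
  by move=> _ Hl; move: Hq; rewrite -Hl eqxx.
rewrite rcons_path last_rcons => /andP [H1 H2] Hx.
exists ((0%N,0%N) :: T), (last (0%N,0%N) T); split.
- by rewrite Hx.
- by rewrite /= H1 eqxx.
- by rewrite -Hx.
Qed.

Lemma pto00 T : pto (0%N,0%N) T -> T = [:: (0%N,0%N)].
Proof.
case: T => [|p T] //= /and3P [/eqP -> Hpath /eqP Hl].
case/lastP: T Hpath Hl => [|T x] //.
by rewrite rcons_path last_rcons => /andP [_ H] Hx; move: H; rewrite Hx tstep00.
Qed.

Lemma pto_range q T : pto q T -> forall p, p \in T -> (p.1 <= q.1)%N /\ (p.2 <= q.2)%N.
Proof.
case: T => [|p0 T] //= /and3P [_ Hpath /eqP <-].
elim: T p0 Hpath => [|x T IH] p0 /=.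
  by move=> _ p; rewrite inE => /eqP ->.
case/andP => Hs Hpath p; rewrite inE => /orP [/eqP ->|Hp]; last exact: IH.
have [h1 h2] := IH x Hpath x (mem_head _ _).
move: Hs; case: p0 => a b; case: x h1 h2 Hpath => c e /= h1 h2 _.
rewrite /tstep => /or3P [] /eqP [] *; subst => /=; split; lia.
Qed.

Variable A : nat -> nat -> R.

Definition cost (T : seq (nat*nat)) : R := \sum_(p <- T) A p.1 p.2.

Lemma cost_rcons T q : cost (rcons T q) = cost T + A q.1 q.2.
Proof. by rewrite /cost -cats1 big_cat big_seq1. Qed.

Definition good (i j : nat) (v : R) : Prop :=
  (forall T, pto (i, j) T -> v <= cost T) /\ (exists2 T, pto (i, j) T & v = cost T).

Lemma good00 : good 0 0 (A 0%N 0%N).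
Proof.
split.
  by move=> T /pto00 ->; rewrite /cost big_seq1.
by exists [:: (0%N, 0%N)]; rewrite /= ?eqxx // /cost big_seq1.
Qed.

Lemma good_r0 j v : good 0 j v -> good 0 j.+1 (v + A 0%N j.+1).
Proof.
move=> [Hl [T1 H1 E1]]; split.
  move=> T HT; have [T0 [q0 [-> H0 /tstep_r0 Hq]]] := pto_dec HT isT.
  by subst q0; rewrite cost_rcons lerD2r; apply: Hl.
exists (rcons T1 (0%N, j.+1)); first by apply: pto_rcons H1 _; rewrite /tstep /= !eqxx ?orbT.
by rewrite cost_rcons E1.
Qed.

Lemma good_c0 i v : good i 0 v -> good i.+1 0 (v + A i.+1 0%N).
Proof.
move=> [Hl [T1 H1 E1]]; split.
  move=> T HT; have [T0 [q0 [-> H0 /tstep_c0 Hq]]] := pto_dec HT isT.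
  by subst q0; rewrite cost_rcons lerD2r; apply: Hl.
exists (rcons T1 (i.+1, 0%N)); first by apply: pto_rcons H1 _; rewrite /tstep /= !eqxx ?orbT.
by rewrite cost_rcons E1.
Qed.

Lemma good_in i j p pd cl : good i j.+1 p -> good i j pd -> good i.+1 j cl ->
  good i.+1 j.+1 (A i.+1 j.+1 + Num.min p (Num.min pd cl)).
Proof.
move=> [Hp [Tp Hp1 Ep]] [Hd [Td Hd1 Ed]] [Hc [Tc Hc1 Ec]]; split.
  move=> T HT; have [T0 [q0 [-> H0 /tstep_in Hq]]] := pto_dec HT isT.
  rewrite cost_rcons addrC lerD2r.
  case: Hq => ?; subst q0.
  - by rewrite ge_min (Hp _ H0).
  - by rewrite ge_min ge_min (Hc _ H0) !orbT.
  - by rewrite ge_min ge_min (Hd _ H0) !orbT.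
have st1 : tstep (i, j.+1) (i.+1, j.+1) by rewrite /tstep /= !eqxx ?orbT.
have st2 : tstep (i.+1, j) (i.+1, j.+1) by rewrite /tstep /= !eqxx ?orbT.
have st3 : tstep (i, j) (i.+1, j.+1) by rewrite /tstep /= !eqxx ?orbT.
rewrite (minEle pd cl); case: leP => _; rewrite minEle; case: leP => _.
- by exists (rcons Tp (i.+1, j.+1)); [apply: pto_rcons Hp1 st1| rewrite cost_rcons Ep addrC].
- by exists (rcons Td (i.+1, j.+1)); [apply: pto_rcons Hd1 st3| rewrite cost_rcons Ed addrC].
- by exists (rcons Tp (i.+1, j.+1)); [apply: pto_rcons Hp1 st1| rewrite cost_rcons Ep addrC].
- by exists (rcons Tc (i.+1, j.+1)); [apply: pto_rcons Hc1 st2| rewrite cost_rcons Ec addrC].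
Qed.


End DP.

Section DP2.
Variable R : realType.

Lemma fra_eq (a : nat -> R) j n prev :
  first_row_aux a j n.+1 prev =
  ((prev + a j) :: (first_row_aux a j.+1 n (prev + a j)).1,
   (first_row_aux a j.+1 n (prev + a j)).2.+1).
Proof. by rewrite /=; case: first_row_aux. Qed.

Lemma na_eq (a : nat -> R) j p ps pd cl :
  next_aux a j (p :: ps) pd cl =
  ((a j + Num.min p (Num.min pd cl)) ::
     (next_aux a j.+1 ps p (a j + Num.min p (Num.min pd cl))).1,
   ((next_aux a j.+1 ps p (a j + Num.min p (Num.min pd cl))).2 + 3)%N).
Proof. by rewrite /=; case: next_aux. Qed.

Lemma nr_eq (a : nat -> R) p0 ps :
  next_row a (p0 :: ps) =
  ((p0 + a 0%N) :: (next_aux a 1 ps p0 (p0 + a 0%N)).1,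
   (next_aux a 1 ps p0 (p0 + a 0%N)).2.+1).
Proof. by rewrite /=; case: next_aux. Qed.

Lemma rf_eq (B : nat -> nat -> R) i n prev :
  rows_from B i n.+1 prev =
  ((rows_from B i.+1 n (next_row (B i) prev).1).1,
   ((next_row (B i) prev).2 + (rows_from B i.+1 n (next_row (B i) prev).1).2)%N).
Proof. by rewrite /=; case: next_row => r k; case: rows_from. Qed.

Lemma fr_eq (a : nat -> R) m :
  first_row a m.+1 = (a 0%N :: (first_row_aux a 1 m (a 0%N)).1,
                      (first_row_aux a 1 m (a 0%N)).2).
Proof. by rewrite /=; case: first_row_aux. Qed.

Lemma dtw_eq (B : nat -> nat -> R) m1 m2 :
  dtw_dp B m1 m2 =
  (last 0 (rows_from B 1 m1.-1 (first_row (B 0%N) m2).1).1,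
   ((first_row (B 0%N) m2).2 + (rows_from B 1 m1.-1 (first_row (B 0%N) m2).1).2)%N).
Proof. by rewrite /dtw_dp; case: first_row => r k; case: rows_from. Qed.

Lemma fra_size (a : nat -> R) j n prev :
  size (first_row_aux a j n prev).1 = n /\ (first_row_aux a j n prev).2 = n.
Proof.
elim: n j prev => [|n IH] j prev //.
by rewrite fra_eq /=; have [-> ->] := IH j.+1 (prev + a j).
Qed.

Lemma na_size (a : nat -> R) j ps pd cl :
  size (next_aux a j ps pd cl).1 = size ps /\ (next_aux a j ps pd cl).2 = (3 * size ps)%N.
Proof.
elim: ps j pd cl => [|p ps IH] j pd cl //.
rewrite na_eq /=; have [-> ->] := IH j.+1 p (a j + Num.min p (Num.min pd cl)).
split => //; lia.
Qed.

Lemma nr_size (a : nat -> R) prev :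
  size (next_row a prev).1 = size prev /\ ((next_row a prev).2 <= 3 * size prev)%N.
Proof.
case: prev => [|p0 ps] //.
rewrite nr_eq /=; have [-> ->] := na_size a 1 ps p0 (p0 + a 0%N).
split => //; lia.
Qed.

Lemma rf_size (B : nat -> nat -> R) n i prev :
  size (rows_from B i n prev).1 = size prev /\
  ((rows_from B i n prev).2 <= n * (3 * size prev))%N.
Proof.
elim: n i prev => [|n IH] i prev //.
rewrite rf_eq /=; have [h1 h2] := nr_size (B i) prev.
have [h3 h4] := IH i.+1 (next_row (B i) prev).1.
rewrite h3 h1; split => //; rewrite h1 in h4; lia.
Qed.

Lemma fr_size (a : nat -> R) m :
  size (first_row a m).1 = m /\ ((first_row a m).2 <= m)%N.
Proof.
case: m => [|m] //; rewrite fr_eq /=; have [-> ->] := fra_size a 1 m (a 0%N).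
by split.
Qed.

Lemma dtw_cnt (B : nat -> nat -> R) m1 m2 : (0 < m1)%N ->
  ((dtw_dp B m1 m2).2 <= 3 * m1 * m2)%N.
Proof.
move=> h; rewrite dtw_eq /=.
have [h1 h2] := fr_size (B 0%N) m2.
have [h3 h4] := rf_size B m1.-1 1 (first_row (B 0%N) m2).1.
rewrite h1 in h4. nia.
Qed.

Section Rows.
Variable A : nat -> nat -> R.
Variable m2 : nat.
Hypothesis m2_gt0 : (0 < m2)%N.

Definition rowgood i (r : seq R) :=
  size r = m2 /\ forall j, (j < m2)%N -> good A i j (nth 0 r j).

Lemma fra_ok n j prev : good A 0 j prev ->
  forall t, (t < n)%N -> good A 0 (j.+1 + t) (nth 0 (first_row_aux (A 0%N) j.+1 n prev).1 t).
Proof.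
elim: n j prev => [|n IH] j prev // Hg t Ht.
rewrite fra_eq /=; case: t Ht => [|t] Ht /=.
  by rewrite addn0; apply: good_r0.
rewrite addnS -addSn; apply: IH => //; exact: good_r0.
Qed.

Lemma fr_ok : rowgood 0 (first_row (A 0%N) m2).1.
Proof.
split; first by have [] := fr_size (A 0%N) m2.
case: m2 m2_gt0 => [|m] // _ j Hj; rewrite fr_eq /=.
case: j Hj => [|j] Hj /=; first exact: good00.
by rewrite -add1n; apply: fra_ok => //; exact: good00.
Qed.

Lemma na_ok i ps j pd cl : good A i j pd -> good A i.+1 j cl ->
  (forall t, (t < size ps)%N -> good A i (j.+1 + t) (nth 0 ps t)) ->
  forall t, (t < size ps)%N ->
    good A i.+1 (j.+1 + t) (nth 0 (next_aux (A i.+1) j.+1 ps pd cl).1 t).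
Proof.
elim: ps j pd cl => [|p ps IH] j pd cl // Hd Hc Hps t Ht.
have Hp : good A i j.+1 p by have := Hps 0%N isT; rewrite addn0.
have Hn := good_in Hp Hd Hc.
rewrite na_eq /=; case: t Ht => [|t] Ht /=; first by rewrite addn0.
rewrite addnS -addSn; apply: IH => // t' Ht'.
by rewrite addSn -addnS; apply: (Hps t'.+1).
Qed.

Lemma nr_ok i prev : rowgood i prev -> rowgood i.+1 (next_row (A i.+1) prev).1.
Proof.
move=> [Hs Hg]; split; first by have [-> _] := nr_size (A i.+1) prev.
case: prev Hs Hg => [|p0 ps] Hs Hg; first by move: m2_gt0; rewrite -Hs.
have Hc : good A i.+1 0 (p0 + A i.+1 0%N) by apply: good_c0; apply: (Hg 0%N); rewrite -Hs.
rewrite nr_eq => j Hj /=.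
case: j Hj => [|j] Hj //=.
rewrite -add1n; apply: (na_ok (j := 0%N)) => //.
- by apply: (Hg 0%N); rewrite -Hs.
- by move=> t Ht; apply: (Hg t.+1); rewrite -Hs /=.
- by rewrite -Hs in Hj.
Qed.

Lemma rf_ok n i r : rowgood i r -> rowgood (i + n) (rows_from A i.+1 n r).1.
Proof.
elim: n i r => [|n IH] i r; first by rewrite addn0.
move=> Hr; rewrite rf_eq /= addnS -addSn; apply: IH; exact: nr_ok.
Qed.

Lemma dtw_ok m1 : (0 < m1)%N -> good A m1.-1 m2.-1 (dtw_dp A m1 m2).1.
Proof.
move=> h1; rewrite dtw_eq /=.
have [Hs Hg] := rf_ok m1.-1 fr_ok; rewrite add0n in Hg.
by rewrite -nth_last Hs; apply: Hg; rewrite prednK.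
Qed.

End Rows.
End DP2.

Section TopK.
Variable R : realType.

Lemma sum_take (s : seq R) k :
  \sum_(l < k) nth 0 s l = \sum_(x <- take k s) x.
Proof.
elim: s k => [|x s IH] [|k].
- by rewrite big_ord0 big_nil.
- by rewrite big1 ?big_nil // => l _; rewrite nth_nil.
- by rewrite big_ord0 big_nil.
- by rewrite big_ord_recl /= big_cons -IH.
Qed.

Lemma sum_const_seq (s : seq R) (c : R) : \sum_(x <- s) c = (size s)%:R * c.
Proof.
elim: s => [|x s IH]; first by rewrite big_nil mul0r.
by rewrite big_cons IH /= -add1n natrD mulrDl mul1r.
Qed.

Lemma topk_le (s : seq R) k t : 0 <= t ->
  \sum_(l < k) nth 0 s l <= k%:R * t + \sum_(x <- s) Num.max (x - t) 0.
Proof.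
move=> t0.
rewrite sum_take -{2}(cat_take_drop k s) big_cat /=.
apply: (@le_trans _ _ (\sum_(x <- take k s) (t + Num.max (x - t) 0))).
  by apply: ler_sum => x _; rewrite -lerBlDl le_max lexx.
rewrite big_split /= sum_const_seq; apply: lerD.
  apply: ler_wpM2r => //; rewrite ler_nat size_take.
  by case: ifP => //; lia.
rewrite lerDl.
by apply: sumr_ge0 => x _; rewrite le_max lexx orbT.
Qed.

Definition geR := fun x y : R => y <= x.

Lemma geR_trans : transitive geR.
Proof. by move=> a b c h1 h2; apply: le_trans h2 h1. Qed.

Lemma geR_refl : reflexive geR.
Proof. by move=> a; apply: lexx. Qed.

Lemma topk_eq (s : seq R) k : sorted geR s -> (forall x, x \in s -> 0 <= x) ->
  \sum_(l < k) nth 0 s l =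
  k%:R * nth 0 s k.-1 + \sum_(x <- s) Num.max (x - nth 0 s k.-1) 0.
Proof.
move=> Hs Hpos; have [t Ht] : exists t, t = nth 0 s k.-1 by exists (nth 0 s k.-1).
rewrite -Ht.
have Ht1 : forall x, x \in take k s -> t <= x.
  move=> x /(nthP 0) [i Hi <-].
  have Hik : (i < k)%N by move: Hi; rewrite size_take; case: ifP => //; lia.
  have Hi2 : (i < size s)%N by move: Hi; rewrite size_take; case: (ltnP k (size s)) => h h2; [exact: ltn_trans h2 h | exact: h2].
  rewrite nth_take //.
  case: (ltnP k.-1 (size s)) => hk.
  - suff: geR (nth 0 s i) (nth 0 s k.-1) by rewrite /geR Ht.
    by apply: (sorted_leq_nth geR_trans geR_refl 0 Hs); rewrite ?inE //; lia.
  - by rewrite Ht nth_default //; apply: Hpos; apply: mem_nth.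
have Ht2 : forall x, x \in drop k s -> x <= t.
  move=> x /(nthP 0) [i Hi <-]; rewrite nth_drop.
  move: Hi; rewrite size_drop => Hi.
  suff: geR (nth 0 s k.-1) (nth 0 s (k + i)) by rewrite /geR Ht.
  have Hi2 : (i < @size R s - k)%N := Hi.
  by apply: (sorted_leq_nth geR_trans geR_refl 0 Hs); rewrite ?inE //; clear -Hi2; lia.
have Hsz : k%:R * t = (size (take k s))%:R * t.
  rewrite size_take; case: ltngtP => hk //; last by rewrite hk.
  by rewrite Ht nth_default ?mulr0 // -ltnS (ltn_predK hk).
rewrite sum_take -{2}(cat_take_drop k s) big_cat /=.
have -> : \sum_(x <- drop k s) Num.max (x - t) 0 = 0.
  rewrite big_seq big1 // => x /Ht2 h; apply: max_r; rewrite subr_le0 //.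
have -> : \sum_(x <- take k s) Num.max (x - t) 0 = \sum_(x <- take k s) (x - t).
  rewrite big_seq [RHS]big_seq; apply: eq_bigr => x /Ht1 h; apply: max_l.
  by rewrite subr_ge0.
by rewrite sumrB sum_const_seq -Hsz addr0 addrC subrK.
Qed.

Definition dstep (acc : seq R * nat) (x : R) : seq R * nat :=
  let: (U, c) := acc in ((if x \in U then U else x :: U), (c + size U)%N).

Lemma dstep_ok (L : seq R) U0 c0 : uniq U0 ->
  let res := foldl dstep (U0, c0) L in
  [/\ uniq res.1, forall y, (y \in res.1) = (y \in U0) || (y \in L),
      (size U0 <= size res.1)%N & (res.2 <= c0 + size L * size res.1)%N].
Proof.
elim: L U0 c0 => [|x L IH] U0 c0 HU /=.
  by split; [done | move=> y; rewrite orbF | done | rewrite mul0n addn0].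
have HU1 : uniq (if x \in U0 then U0 else x :: U0).
  by case: ifP => //= ->.
have [h1 h2 h3 h4] := IH _ (c0 + size U0)%N HU1.
split => //.
- move=> y; rewrite h2; case: ifP => Hx; rewrite !inE.
  + by case: (eqVneq y x) => [->|]; rewrite ?Hx ?orbT.
  + by case: (y == x); case: (y \in U0); case: (y \in L).
- by apply: leq_trans h3; case: ifP => //= _; lia.
- have : (size U0 <= size (foldl dstep (if x \in U0 then U0 else x :: U0, (c0 + size U0)%N) L).1)%N.
    by apply: leq_trans h3; case: ifP => //= _; lia.
  move: h4; set r := foldl _ _ _; lia.
Qed.

Lemma distinct_spec (L : seq R) :
  [/\ uniq (distinct_c L).1, forall y, (y \in (distinct_c L).1) = (y \in L),
      size (distinct_c L).1 = size (undup L) &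
      ((distinct_c L).2 <= size L * size (distinct_c L).1)%N].
Proof.
have -> : distinct_c L = foldl dstep ([::], 0%N) L by [].
have [h1 h2 _ h4] := dstep_ok L 0%N (isT : uniq ([::] : seq R)).
split => //.
apply: perm_size; apply: uniq_perm => //; first exact: undup_uniq.
by move=> y; rewrite h2 mem_undup.
Qed.

Lemma ins_ok x (s : seq R) : perm_eq (ins_c x s).1 (x :: s) /\ ((ins_c x s).2 <= size s)%N.
Proof.
elim: s => [|y s IH] //=.
case: ifP => _ //=.
move: IH; case: ins_c => t c /= [Hp Hc]; split; last by lia.
apply: (@perm_trans _ (y :: x :: s)); first by rewrite perm_cons.
by rewrite (perm_catCA [:: y] [:: x] s).
Qed.

Lemma isort_eq x (s : seq R) :
  isort_c (x :: s) = ((ins_c x (isort_c s).1).1, ((isort_c s).2 + (ins_c x (isort_c s).1).2)%N).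
Proof. by rewrite /isort_c /=; case: ins_c. Qed.

Lemma isort_ok (s : seq R) : perm_eq (isort_c s).1 s /\ ((isort_c s).2 <= size s * size s)%N.
Proof.
elim: s => [|x s [IH1 IH2]] //.
rewrite isort_eq; have [h1 h2] := ins_ok x (isort_c s).1.
split.
  by apply: perm_trans h1 _; rewrite perm_cons.
rewrite (perm_size IH1) in h2; move: h2 IH2 => /=; nia.
Qed.

Section Fold.
Variable F : option R * nat -> R -> option R * nat.
Variable cand : R -> R.
Variable B : nat.
Hypothesis HF1 : forall acc e,
  (F acc e).1 = Some (if acc.1 is Some x then Num.min x (cand e) else cand e).
Hypothesis HF2 : forall acc e, ((F acc e).2 <= acc.2 + B)%N.

Lemma fold_cnt s acc : ((foldl F acc s).2 <= acc.2 + size s * B)%N.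
Proof.
elim: s acc => [|e s IH] acc /=; first by lia.
have := IH (F acc e); have := HF2 acc e; lia.
Qed.

Lemma fold_val s acc : (acc.1 != None) || (s != [::]) ->
  exists x, [/\ (foldl F acc s).1 = Some x, (forall e, e \in s -> x <= cand e),
     (forall y, acc.1 = Some y -> x <= y) &
     ((exists2 e, e \in s & x = cand e) \/ acc.1 = Some x)].
Proof.
elim: s acc => [|e s IH] acc /=.
  rewrite orbF; case: acc.1 => [x|] // _; exists x; split => //.
    by move=> y [->].
  by right.
move=> _; have [|x [h1 h2 h3 h4]] := IH (F acc e); first by rewrite HF1.
have Hm : x <= (if acc.1 is Some x then Num.min x (cand e) else cand e) by apply: h3.
exists x; split => //.
- move=> e'; rewrite inE => /orP [/eqP ->|]; last exact: h2.
  apply: le_trans Hm _; case: acc.1 => [y|] //; rewrite ge_min lexx orbT //.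
- move=> y Hy; apply: le_trans Hm _; rewrite Hy ge_min lexx //.
- case: h4 => [[e' He' ->]|]; first by left; exists e' => //; rewrite inE He' orbT.
  rewrite HF1 => -[<-]; case: acc.1 => [y|].
    rewrite minEle; case: ifP => _; [by right | by left; exists e; rewrite ?mem_head].
  by left; exists e; rewrite ?mem_head.
Qed.
End Fold.
End TopK.

Section Main.
Variables (R : realType) (d : nat) (sigma tau : seq 'rV[R]_d) (k : nat).

Lemma vdist_ge0 i j : 0 <= vdist sigma tau i j.
Proof. by rewrite /vdist /vnorm sqrtr_ge0. Qed.

Definition Dp (e : R) := fun i j => Num.max (vdist sigma tau i j - e) 0.
Definition cand (e : R) :=
  (dtw_dp (Dp e) (size sigma) (size tau)).1 + k%:R * e.
Definition dl (T : seq (nat * nat)) := sort (@geR R) [seq vdist sigma tau p.1 p.2 | p <- T].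

Lemma kcostE T : kcost sigma tau k T = \sum_(l < k) nth 0 (dl T) l.
Proof. by []. Qed.

Lemma costE e T : cost (Dp e) T = \sum_(y <- dl T) Num.max (y - e) 0.
Proof.
rewrite /cost -(big_map (fun p => vdist sigma tau p.1 p.2) xpredT (fun y => Num.max (y - e) 0)).
by apply: perm_big; rewrite /dl perm_sym perm_sort.
Qed.

Lemma dl_ge0 T y : y \in dl T -> 0 <= y.
Proof. by rewrite /dl (perm_mem (permEl (perm_sort _ _))) => /mapP [p _ ->]; apply: vdist_ge0. Qed.

Lemma dl_sorted T : sorted (@geR R) (dl T).
Proof. by apply: sort_sorted => a b; apply: le_total. Qed.

Lemma kdtw_core (E : seq R) x :
  (0 < size sigma)%N -> (0 < size tau)%N ->
  (forall e, e \in E -> 0 <= e) ->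
  (forall i j, (i < size sigma)%N -> (j < size tau)%N -> vdist sigma tau i j \in E) ->
  0 \in E ->
  (forall e, e \in E -> x <= cand e) -> (exists2 e, e \in E & x = cand e) ->
  is_kDTW sigma tau k x.
Proof.
move=> Hm1 Hm2 HEpos HED HE0 Hle [e0 He0 Hx].
have Hlow : forall T, traversal (size sigma) (size tau) T -> x <= kcost sigma tau k T.
  move=> T HT.
  have HT' : pto ((size sigma).-1, (size tau).-1) T := HT.
  set t := nth 0 (dl T) k.-1.
  have Ht : t \in E.
    case: (ltnP k.-1 (size (dl T))) => hk.
      have : t \in dl T by apply: mem_nth.
      rewrite /dl (perm_mem (permEl (perm_sort _ _))) => /mapP [p Hp ->].
      have [h1 h2] := pto_range HT' Hp.
      apply: HED.
        by apply: leq_ltn_trans h1 _; rewrite /= prednK.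
      by apply: leq_ltn_trans h2 _; rewrite /= prednK.
    by rewrite /t nth_default.
  apply: le_trans (Hle _ Ht) _.
  rewrite kcostE (topk_eq k (dl_sorted T) (@dl_ge0 T)) -/t /cand -costE addrC lerD2l.
  by have [H _] := dtw_ok (Dp t) Hm2 Hm1; apply: H.
split => //.
have [_ [T0 HT0 E0]] := dtw_ok (Dp e0) Hm2 Hm1.
exists T0 => //.
apply: le_anti; rewrite Hlow //=.
rewrite Hx /cand E0 costE kcostE addrC.
by apply: topk_le; apply: HEpos.
Qed.

End Main.

Theorem theorem3p2 :
  exists C : nat,
  forall (R : realType) (d : nat) (sigma tau : seq 'rV[R]_d) (k : nat),
    (0 < size sigma)%N -> (0 < size tau)%N ->
    (exists2 x : R, (kdtw_alg sigma tau k).1 = Some x & is_kDTW sigma tau k x) /\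
    ((kdtw_alg sigma tau k).2 <=
       C * (size sigma * size tau * num_distinct sigma tau))%N.
Proof.
exists 100%N => R d sigma tau k Hm1 Hm2.
rewrite /kdtw_alg /num_distinct.
match goal with |- context [distinct_c ?L0] => set L := L0 end.
have HL : forall i j, (i < size sigma)%N -> (j < size tau)%N -> vdist sigma tau i j \in L.
  by move=> i j hi hj; apply: allpairs_f; rewrite mem_iota.
have HL2 : forall y, y \in L -> 0 <= y.
  by move=> y /allpairsP [p [_ _ ->]]; apply: vdist_ge0.
have HLs : size L = (size sigma * size tau)%N by rewrite size_allpairs !size_iota.
have HLu1 : (0 < size (undup L))%N.
  have h : vdist sigma tau 0 0 \in undup L by rewrite mem_undup; apply: HL.
  by case: (undup L) h.
have HLu2 : (size (undup L) <= size L)%N by apply: size_undup.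
have := distinct_spec L; case: (distinct_c L) => U cU.
move=> /= [HUu HUm HUs HUc].
have := isort_ok U; case: (isort_c U) => Srt cS /= [HSp HSc].
match goal with |- context [foldl ?F (None, 0%N) _] => set F0 := F end.
have HF1 : forall acc e, (F0 acc e).1 =
    Some (if acc.1 is Some x then Num.min x (cand sigma tau k e) else cand sigma tau k e).
  by move=> acc e; rewrite /F0 /cand /Dp /=; case: dtw_dp.
have HF2 : forall acc e, ((F0 acc e).2 <= acc.2 + (5 * (size sigma * size tau) + 3))%N.
  move=> acc e; have := dtw_cnt (Dp sigma tau e) (size tau) Hm1.
  rewrite /F0 /Dp /=; case: dtw_dp => t ct /= h; lia.
have [|x [Hx1 Hx2 _ Hx3]] := fold_val HF1 (s := Srt ++ [:: 0]) (acc := (None, 0%N)).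
  by case: Srt {HSp HSc F0 HF1 HF2}.
have Hcnt := fold_cnt HF2 (Srt ++ [:: 0]) (None, 0%N).
case: (foldl F0 _ _) Hx1 Hcnt => res cL /= -> Hcnt.
split.
  exists x => //; apply: (kdtw_core (E := Srt ++ [:: 0])) => //.
  - move=> e; rewrite mem_cat => /orP [h|]; last by rewrite inE => /eqP ->.
    by apply: HL2; rewrite -HUm -(perm_mem HSp).
  - by move=> i j hi hj; rewrite mem_cat (perm_mem HSp) HUm HL.
  - by rewrite mem_cat mem_seq1 eqxx orbT.
  - by case: Hx3.
rewrite size_cat /= (perm_size HSp) HUs in Hcnt.
rewrite HLs HUs in HUc; rewrite HUs in HSc; rewrite HLs in HLu2.
have HP : (0 < size sigma * size tau)%N by rewrite muln_gt0 Hm1.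
move: HP HUc HSc Hcnt HLu1 HLu2.
move: (size sigma * size tau)%N (size (undup L)) => P z.
clear; nia.
Qed.
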